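(* Let $(\mathcal S,\mathcal A,H,P,R,\mu)$ be an episodic tabular MDP as in the context. Suppose the actions do not affect the transitions, i.e., $P_h(s'\mid s,a)=P_h(s'\mid s)$ for all $h,s,a,s'$. Then $CR^L(P)=\frac1A$ for every $L\in[H]$.
   Context: Episodic tabular MDP $(\mathcal S,\mathcal A,H,P,R,\mu)$: finite state space $\mathcal S$ with $|\mathcal S|=S$, finite action space $\mathcal A$ with $|\mathcal A|=A$, horizon $H\in\mathbb N$, transition kernels $P_h(\cdot\mid s,a)$, initial state distribution $\mu$, and random non-negative rewards $R_h(s,a)$ for $(h,s,a)\in\mathcal X:=[H]\times\mathcal S\times\mathcal A$. Initially $s_1\sim\mu$; at step $h$ the agent in state $s_h$ picks $a_h$, receives $R_h(s_h,a_h)$ and moves to $s_{h+1}\sim P_h(\cdot\mid s_h,a_h)$. All rewards are drawn before the interaction. The vectors $\mathcal R_h=\{R_h(s,a)\}_{s,a}$ for different $h$ are mutually independent (entries of one $\mathcal R_h$ may be arbitrarily correlated); rewards are independent of transitions, and transitions are independent across steps. Let $r_h(s,a)=\mathbb E[R_h(s,a)]$ and let $\mathcal D(r)$ denote the set of all such reward distributions with means $r$. For $L\in\{0,\dots,H\}$ an $L$-lookahead policy draws $a_h\sim\pi_h(\cdot\mid s_h,\mathcal R_h^L)$, where $\mathcal R_h^L=(\mathcal R_t)_{h\le t\le\min(h+L-1,H)}$ and $\mathcal R_h^0=\emptyset$; $\Pi^L$ is the set of these policies. The value is $V^{L,\pi}(P,r)=\mathbb E[\sum_{h=1}^H R_h(s_h,a_h)]$,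 and $V^{L,*}(P,r)=\sup_{\pi\in\Pi^L}V^{L,\pi}(P,r)$. The competitive ratio is $CR^L(P,r)=\inf_{\mathcal D(r)}V^{0,*}(P,r)/V^{L,*}(P,r)$, with the convention that any division by zero equals $+\infty$. Also $CR^L(P)=\inf\{CR^L(P,r): r_h\in[0,1]^{SA}\ \forall h\}$. *)

(* Defs.v *)
From HB Require Import structures.
From mathcomp Require Import all_boot all_order all_algebra.
From mathcomp Require Import all_classical all_reals all_analysis.
Set Implicit Arguments. Unset Strict Implicit. Unset Printing Implicit Defensive.
Import Order.TTheory GRing.Theory Num.Theory.
Local Open Scope classical_set_scope.
Local Open Scope ring_scope.

(* Steps h = 1..H of the paper are indexed 0..H-1 here (h < H).            *)
Section EpisodicMDP.
Variables (R : realType) (S A : finType) (H : nat).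

Definition is_distr (mu : S -> R) : Prop :=
  (forall s, 0 <= mu s) /\ \sum_(s : S) mu s = 1.

Definition is_kernel (P : nat -> S -> A -> S -> R) : Prop :=
  forall h, (h < H)%N -> forall s a,
    (forall s', 0 <= P h s a s') /\ \sum_(s' : S) P h s a s' = 1.

Definition action_independent (P : nat -> S -> A -> S -> R) : Prop :=
  forall h, (h < H)%N -> forall s a a' s', P h s a s' = P h s a' s'.

(* The lookahead window R_h^L = (R_t)_{h <= t <= min(h+L-1, H)} seen at step h,
   encoded as a function of the offset k = t - h; entries outside the window
   are masked to the constant 0 (so a policy cannot depend on them). *)
Definition window {T : Type} (L : nat) (Rw : nat -> S -> A -> T -> R) (w : T)
  (h : nat) : nat -> S -> A -> R :=
  fun k s a => if ((k < L) && (h + k < H))%N then Rw (h + k)%N s a w else 0.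

(* A (randomized) lookahead policy: pi h s W a = pi_h(a | s, W). *)
Definition policy := nat -> S -> (nat -> S -> A -> R) -> A -> R.

Definition is_policy (pi : policy) : Prop :=
  forall h s W, (forall a, 0 <= pi h s W a) /\ \sum_(a : A) pi h s W a = 1.

Definition traj := {ffun 'I_H -> S * A}.

Definition traj_prob {T : Type} (mu : S -> R) (P : nat -> S -> A -> S -> R)
  (L : nat) (Rw : nat -> S -> A -> T -> R) (pi : policy) (w : T) (tau : traj) : R :=
  (\prod_(i : 'I_H | val i == 0%N) mu (tau i).1) *
  (\prod_(i : 'I_H) pi i (tau i).1 (window L Rw w i) (tau i).2) *
  (\prod_(i : 'I_H) \prod_(j : 'I_H | val j == (val i).+1)
      P i (tau i).1 (tau i).2 (tau j).1).

Definition traj_return {T : Type} (Rw : nat -> S -> A -> T -> R) (w : T)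
  (tau : traj) : R :=
  \sum_(i : 'I_H) Rw i (tau i).1 (tau i).2 w.

Definition value (d : measure_display) (Om : measurableType d)
  (Pr : probability Om R) (mu : S -> R) (P : nat -> S -> A -> S -> R)
  (L : nat) (Rw : nat -> S -> A -> Om -> R) (pi : policy) : \bar R :=
  (\int[Pr]_w (\sum_(tau : traj)
      traj_prob mu P L Rw pi w tau * traj_return Rw w tau)%:E)%E.

Definition admissible (d : measure_display) (Om : measurableType d)
  (L : nat) (Rw : nat -> S -> A -> Om -> R) (pi : policy) : Prop :=
  is_policy pi /\
  forall h s a, (h < H)%N ->
    measurable_fun setT (fun w => pi h s (window L Rw w h) a).

Definition opt_value (d : measure_display) (Om : measurableType d)
  (Pr : probability Om R) (mu : S -> R) (P : nat -> S -> A -> S -> R)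
  (L : nat) (Rw : nat -> S -> A -> Om -> R) : \bar R :=
  ereal_sup ((value Pr mu P L Rw) @` [set pi | admissible L Rw pi]).

(* the reward vectors R_h = {R_h(s,a)}_{s,a}, h < H, are mutually independent
   (product rule on rectangles, which generate the product sigma-algebra) *)
Definition rewards_indep (d : measure_display) (Om : measurableType d)
  (Pr : probability Om R) (Rw : nat -> S -> A -> Om -> R) : Prop :=
  forall B : nat -> S -> A -> set R, (forall h s a, measurable (B h s a)) ->
    Pr [set w | forall h, (h < H)%N -> forall s a, B h s a (Rw h s a w)] =
    (\prod_(h < H) Pr [set w | forall s a, B h s a (Rw h s a w)])%E.

Definition reward_model (d : measure_display) (Om : measurableType d)
  (Pr : probability Om R) (Rw : nat -> S -> A -> Om -> R)
  (r : nat -> S -> A -> R) : Prop :=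
  [/\ forall h s a, (h < H)%N -> measurable_fun setT (Rw h s a),
      forall h s a w, (h < H)%N -> 0 <= Rw h s a w,
      forall h s a, (h < H)%N -> (\int[Pr]_w (Rw h s a w)%:E)%E = (r h s a)%:E
    & rewards_indep Pr Rw].

Definition eratio (x y : \bar R) : \bar R :=
  if y == 0%E then +oo%E else (x * y^-1)%E.

Definition CR_r (L : nat) (mu : S -> R) (P : nat -> S -> A -> S -> R)
  (r : nat -> S -> A -> R) : \bar R :=
  ereal_inf [set c | exists (d : measure_display) (Om : measurableType d)
     (Pr : probability Om R) (Rw : nat -> S -> A -> Om -> R),
     reward_model Pr Rw r /\
     c = eratio (opt_value Pr mu P 0 Rw) (opt_value Pr mu P L Rw)].

Definition CR (L : nat) (mu : S -> R) (P : nat -> S -> A -> S -> R) : \bar R :=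
  ereal_inf [set c | exists r : nat -> S -> A -> R,
     (forall h s a, (h < H)%N -> 0 <= r h s a <= 1) /\ c = CR_r L mu P r].

End EpisodicMDP.

(* Main.v *)
Require Import Defs.
From HB Require Import structures.
From mathcomp Require Import all_boot all_order all_algebra.
From mathcomp Require Import all_classical all_reals all_analysis.
Import Order.TTheory GRing.Theory Num.Theory.
Local Open Scope ring_scope.

Section Unif.
Variables (R : realType) (m : nat).
Local Notation n := m.+1.

Let c0 : 0 <= (n%:R : R)^-1. Proof. by rewrite invr_ge0. Qed.
Let c : {nonneg R} := NngNum c0.

Definition uprob : set nat -> \bar R := msum (fun k => mscale c (@dirac _ _ k R)) n.

Let um := msum (fun k => mscale c (@dirac _ _ k R)) n.

HB.instance Definition _ := isMeasure.Build _ _ _ uprob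
  (measure0 um) (measure_ge0 um) (@measure_semi_sigma_additive _ _ _ um).

Let uprob_setT : uprob setT = 1%E.
Proof.
rewrite /uprob /msum /mscale /=.
transitivity (\sum_(k < n) (c%:num)%:E)%E; first by apply: eq_bigr => k _; rewrite /mscale /= /dirac indicE in_setT mule1.
rewrite sumEFin sumr_const card_ord /= -(mulr_natr ((n%:R : R)^-1)) mulVf //.
Qed.

HB.instance Definition _ := @Measure_isProbability.Build _ _ R uprob uprob_setT.

Lemma meas_nat (f : nat -> R) : measurable_fun setT f.
Proof. by move=> _ Y mY. Qed.

Lemma integral_uprob (f : nat -> R) : (forall k, 0 <= f k) ->
  (\int[uprob]_w (f w)%:E = (\sum_(k < n) (n%:R)^-1 * f k)%:E)%E.
Proof.
move=> f0.
have mf := (measurable_realfun.measurable_EFinP [set: nat] f).2 (meas_nat f).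
have f0' : forall w, setT w -> (0 <= (f w)%:E)%E by move=> w _; rewrite lee_fin.
rewrite /uprob ge0_integral_measure_sum //.
rewrite -sumEFin; apply: eq_bigr => k _.
rewrite ge0_integral_mscale // integral_dirac //.
by rewrite /dirac indicE in_setT mul1e -EFinM.
Qed.

End Unif.

Section Comb.
Variables (R : realType) (I J : finType).

Lemma prod_sum_one (F : I -> J -> R) (g : J -> R) (j : I) :
  (forall i, \sum_(a : J) F i a = 1) ->
  \sum_(f : {ffun I -> J}) (\prod_i F i (f i)) * g (f j) = \sum_(a : J) F j a * g a.
Proof.
move=> HF.
pose F' i a := F i a * (if i == j then g a else 1).
have -> : \sum_(a : J) F j a * g a = \prod_i \sum_(a : J) F' i a.
  rewrite [RHS](bigD1 j) //= [X in _ * X]big1 ?mulr1; last first.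
    by move=> i ij; rewrite -(HF i); apply: eq_bigr => a _; rewrite /F' (negbTE ij) mulr1.
  by apply: eq_bigr => a _; rewrite /F' eqxx.
rewrite bigA_distr_bigA; apply: eq_bigr => f _.
rewrite /F' big_split /=; congr (_ * _).
rewrite (bigD1 j) //= eqxx [X in _ * X]big1 ?mulr1 // => i ij; by rewrite (negbTE ij).
Qed.
End Comb.

Section Formula.
Variables (R : realType) (S A : finType) (H : nat) (mu : S -> R)
  (P : nat -> S -> A -> S -> R) (a0 : A).

Definition Mw (sg : {ffun 'I_H -> S}) : R :=
  (\prod_(i : 'I_H | val i == 0%N) mu (sg i)) *
  \prod_(i : 'I_H) \prod_(j : 'I_H | val j == (val i).+1) P i (sg i) a0 (sg j).

Definition Ifun {T : Type} L (Rw : nat -> S -> A -> T -> R) (pi : policy R S A) (w : T) : R :=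
  \sum_(sg : {ffun 'I_H -> S}) Mw sg *
    \sum_(j : 'I_H) \sum_(a : A) pi j (sg j) (window H L Rw w j) a * Rw j (sg j) a w.

Lemma traj_formula {T : Type} L (Rw : nat -> S -> A -> T -> R) (pi : policy R S A) w :
  action_independent H P -> is_policy pi ->
  \sum_(tau : traj S A H) traj_prob mu P L Rw pi w tau * traj_return Rw w tau =
  Ifun L Rw pi w.
Proof.
move=> Hai Hpi.
pose h (p : {ffun 'I_H -> S} * {ffun 'I_H -> A}) : traj S A H :=
  [ffun i => (p.1 i, p.2 i)].
pose hi (tau : traj S A H) := ([ffun i => (tau i).1], [ffun i => (tau i).2]).
rewrite (reindex h) /=; last first.
  exists hi => [[sg al] _|tau _].
    by rewrite /hi /h; congr pair; apply/ffunP => i; rewrite !ffunE.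
  by apply/ffunP => i; rewrite /hi /h !ffunE /=; case: (tau i).
transitivity (\sum_(sg : {ffun 'I_H -> S}) \sum_(al : {ffun 'I_H -> A})
   traj_prob mu P L Rw pi w (h (sg, al)) * traj_return Rw w (h (sg, al))).
  by rewrite pair_bigA; apply: eq_bigr => -[sg al] _.
apply: eq_bigr => sg _.
transitivity (\sum_(al : {ffun 'I_H -> A}) Mw sg *
   \sum_(j : 'I_H) (\prod_(i : 'I_H) pi i (sg i) (window H L Rw w i) (al i)) * Rw j (sg j) (al j) w).
  apply: eq_bigr => al _.
  rewrite /traj_prob /traj_return /Mw.
  have E i : h (sg, al) i = (sg i, al i) by rewrite /h ffunE.
  have e1 : \prod_(i : 'I_H | val i == 0%N) mu (h (sg, al) i).1 =
            \prod_(i : 'I_H | val i == 0%N) mu (sg i).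
    by apply: eq_bigr => i _; rewrite E.
  have e2 : \prod_(i : 'I_H) pi i (h (sg, al) i).1 (window H L Rw w i) (h (sg, al) i).2 =
            \prod_(i : 'I_H) pi i (sg i) (window H L Rw w i) (al i).
    by apply: eq_bigr => i _; rewrite E.
  have e3 : \prod_(i : 'I_H) \prod_(j : 'I_H | val j == (val i).+1)
               P i (h (sg, al) i).1 (h (sg, al) i).2 (h (sg, al) j).1 =
            \prod_(i : 'I_H) \prod_(j : 'I_H | val j == (val i).+1) P i (sg i) a0 (sg j).
    apply: eq_bigr => i _; apply: eq_bigr => j _; rewrite !E /=.
    exact: Hai (ltn_ord i) _ _ _ _.
  have e4 : \sum_(i : 'I_H) Rw i (h (sg, al) i).1 (h (sg, al) i).2 w =
            \sum_(i : 'I_H) Rw i (sg i) (al i) w.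
    by apply: eq_bigr => i _; rewrite E.
  rewrite e1 e2 e3 e4.
  rewrite -big_distrr /=.
  by rewrite -!mulrA; congr (_ * _); rewrite mulrCA.
rewrite -big_distrr /=; congr (_ * _).
rewrite exchange_big /=; apply: eq_bigr => j _.
apply: (@prod_sum_one R _ _ (fun (i : 'I_H) a => pi i (sg i) (window H L Rw w i) a) (fun a => Rw j (sg j) a w)).
by move=> i; case: (Hpi i (sg i) (window H L Rw w i)).
Qed.


Lemma int_sum_EFin d (Om : measurableType d) (Pr : probability Om R) (I : finType)
  (F : I -> Om -> R) :
  (forall i, measurable_fun setT (F i)) -> (forall i w, 0 <= F i w) ->
  (\int[Pr]_w (\sum_(i : I) F i w)%:E = \sum_(i : I) \int[Pr]_w (F i w)%:E)%E.
Proof.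
move=> mF F0.
under eq_integral do rewrite -sumEFin.
apply: ge0_integral_sum => //.
  by move=> i; apply/measurable_realfun.measurable_EFinP.
by move=> i w _; rewrite lee_fin.
Qed.

Lemma int_scale_EFin d (Om : measurableType d) (Pr : probability Om R)
  (c : R) (F : Om -> R) :
  measurable_fun setT F -> (forall w, 0 <= F w) -> 0 <= c ->
  (\int[Pr]_w (c * F w)%:E = c%:E * \int[Pr]_w (F w)%:E)%E.
Proof.
move=> mF F0 c0.
under eq_integral do rewrite EFinM.
apply: ge0_integralZl_EFin => //.
  by move=> w _; rewrite lee_fin.
by apply/measurable_realfun.measurable_EFinP.
Qed.


Hypothesis mu0 : forall s, 0 <= mu s.
Hypothesis P0 : forall h, (h < H)%N -> forall s a s', 0 <= P h s a s'.

Lemma Mw_ge0 sg : 0 <= Mw sg.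
Proof.
rewrite /Mw; apply: mulr_ge0; apply: prodr_ge0 => i _ //.
by apply: prodr_ge0 => j _; apply: P0.
Qed.

Definition Yfun {T : Type} (Rw : nat -> S -> A -> T -> R) (w : T) : R :=
  \sum_(sg : {ffun 'I_H -> S}) Mw sg * \sum_(j : 'I_H) \sum_(a : A) Rw j (sg j) a w.

Definition unif : policy R S A := fun _ _ _ _ => (#|A|%:R)^-1.

Lemma pol_le1 (pi : policy R S A) h s W a : is_policy pi -> pi h s W a <= 1.
Proof.
move=> /(_ h s W) [p0 p1]; rewrite -p1 (bigD1 a) //= lerDl.
by apply: sumr_ge0 => b _.
Qed.

Lemma Ifun_le {T : Type} L (Rw : nat -> S -> A -> T -> R) (pi : policy R S A) w :
  (forall h s a, (h < H)%N -> 0 <= Rw h s a w) -> is_policy pi ->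
  Ifun L Rw pi w <= Yfun Rw w.
Proof.
move=> R0 Hpi; rewrite /Ifun /Yfun; apply: ler_sum => sg _.
apply: ler_wpM2l; first exact: Mw_ge0.
apply: ler_sum => j _; apply: ler_sum => a _.
rewrite -[X in _ <= X]mul1r; apply: ler_wpM2r; first exact: R0.
exact: pol_le1.
Qed.

Lemma Ifun_unif {T : Type} L (Rw : nat -> S -> A -> T -> R) w :
  Ifun L Rw unif w = (#|A|%:R)^-1 * Yfun Rw w.
Proof.
rewrite /Ifun /Yfun big_distrr; apply: eq_bigr => sg _.
rewrite [RHS]mulrCA; congr (_ * _); rewrite big_distrr; apply: eq_bigr => j _.
by rewrite big_distrr.
Qed.

Hypothesis Apos : (0 < #|A|)%N.

Lemma unif_policy : is_policy unif.
Proof.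
move=> h s W; split => [a|]; first by rewrite /unif invr_ge0.
rewrite /unif sumr_const; change ((#|A|%:R)^-1 *+ #|A| = 1 :> R); rewrite -(mulr_natr ((#|A|%:R)^-1)) mulVf //.
by rewrite pnatr_eq0 -lt0n.
Qed.

Lemma unif_adm d (Om : measurableType d) L (Rw : nat -> S -> A -> Om -> R) :
  admissible H L Rw unif.
Proof.
split; first exact: unif_policy.
by move=> h s a _; apply: measurable_cst.
Qed.


Lemma Ifun_ge0 {T : Type} L (Rw : nat -> S -> A -> T -> R) (pi : policy R S A) w :
  (forall h s a, (h < H)%N -> 0 <= Rw h s a w) -> is_policy pi ->
  0 <= Ifun L Rw pi w.
Proof.
move=> R0 Hpi; apply: sumr_ge0 => sg _; apply: mulr_ge0; first exact: Mw_ge0.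
apply: sumr_ge0 => j _; apply: sumr_ge0 => a _; apply: mulr_ge0; last exact: R0.
by case: (Hpi j (sg j) (window H L Rw w j)).
Qed.

Lemma Yfun_ge0 {T : Type} (Rw : nat -> S -> A -> T -> R) w :
  (forall h s a, (h < H)%N -> 0 <= Rw h s a w) -> 0 <= Yfun Rw w.
Proof.
move=> R0; apply: sumr_ge0 => sg _; apply: mulr_ge0; first exact: Mw_ge0.
by apply: sumr_ge0 => j _; apply: sumr_ge0 => a _; exact: R0.
Qed.

Section Model.
Variables (d : measure_display) (Om : measurableType d) (Pr : probability Om R)
  (Rw : nat -> S -> A -> Om -> R) (r : nat -> S -> A -> R).
Hypothesis Hrm : reward_model H Pr Rw r.
Hypothesis Hai : action_independent H P.

Let mRw h s a : (h < H)%N -> measurable_fun setT (Rw h s a).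
Proof. by case: Hrm => m _ _ _; exact: m. Qed.
Let Rw0 w h s a : (h < H)%N -> 0 <= Rw h s a w.
Proof. by case: Hrm => _ p _ _; exact: p. Qed.
Let Rwm h s a : (h < H)%N -> (\int[Pr]_w (Rw h s a w)%:E = (r h s a)%:E)%E.
Proof. by case: Hrm => _ _ p _; exact: p. Qed.

Lemma meas_Ifun L pi : admissible H L Rw pi -> measurable_fun setT (Ifun L Rw pi).
Proof.
case=> _ mpi; rewrite /Ifun.
apply: measurable_sum => sg; apply: measurable_realfun.measurable_funM; first exact: measurable_cst.
apply: measurable_sum => j; apply: measurable_sum => a.
by apply: measurable_realfun.measurable_funM; [exact: mpi | exact: mRw].
Qed.

Lemma meas_Yfun : measurable_fun setT (Yfun Rw).
Proof.
rewrite /Yfun.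
apply: measurable_sum => sg; apply: measurable_realfun.measurable_funM; first exact: measurable_cst.
apply: measurable_sum => j; apply: measurable_sum => a.
exact: mRw.
Qed.

Definition ybar := \sum_(sg : {ffun 'I_H -> S}) Mw sg * \sum_(j : 'I_H) \sum_(a : A) r j (sg j) a.

Lemma int_Y : (\int[Pr]_w (Yfun Rw w)%:E = ybar%:E)%E.
Proof.
rewrite /Yfun (@int_sum_EFin _ _ Pr _ (fun sg w => Mw sg * \sum_(j : 'I_H) \sum_(a : A) Rw j (sg j) a w)); last 2 first.
- move=> sg; apply: measurable_realfun.measurable_funM; first exact: measurable_cst.
  by apply: measurable_sum => j; apply: measurable_sum => a; exact: mRw.
- move=> sg w; apply: mulr_ge0; first exact: Mw_ge0.
  by apply: sumr_ge0 => j _; apply: sumr_ge0 => a _; exact: Rw0.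
rewrite /ybar -sumEFin; apply: eq_bigr => sg _.
rewrite int_scale_EFin; last 3 first.
- by apply: measurable_sum => j; apply: measurable_sum => a; exact: mRw.
- by move=> w; apply: sumr_ge0 => j _; apply: sumr_ge0 => a _; exact: Rw0.
- exact: Mw_ge0.
rewrite [RHS]EFinM; congr (_ * _)%E.
rewrite (@int_sum_EFin _ _ Pr _ (fun (j : 'I_H) w => \sum_(a : A) Rw j (sg j) a w)); last 2 first.
- by move=> j; apply: measurable_sum => a; exact: mRw.
- by move=> j w; apply: sumr_ge0 => a _; exact: Rw0.
rewrite -sumEFin; apply: eq_bigr => j _.
rewrite (@int_sum_EFin _ _ Pr _ (fun (a : A) w => Rw j (sg j) a w)); last 2 first.
- by move=> a; exact: mRw.
- by move=> a w; exact: Rw0.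
rewrite -sumEFin; apply: eq_bigr => a _.
exact: Rwm.
Qed.

Lemma value_Ifun L pi : is_policy pi ->
  value H Pr mu P L Rw pi = (\int[Pr]_w (Ifun L Rw pi w)%:E)%E.
Proof.
move=> Hpi; rewrite /value; apply: eq_integral => w _.
by rewrite traj_formula.
Qed.

Lemma ybar_ge0 : 0 <= ybar.
Proof.
have := integral_ge0 Pr (D := setT) (f := fun w => (Yfun Rw w)%:E).
rewrite int_Y lee_fin; apply => w _; rewrite lee_fin; apply: Yfun_ge0 => h s a; exact: Rw0.
Qed.

Lemma opt_bounds L :
  (((#|A|%:R)^-1 * ybar)%:E <= opt_value H Pr mu P L Rw)%E /\
  (opt_value H Pr mu P L Rw <= ybar%:E)%E.
Proof.
split.
  apply: ereal_sup_ubound; exists unif; first exact: unif_adm.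
  rewrite value_Ifun; last exact: unif_policy.
  under eq_integral do rewrite Ifun_unif.
  rewrite int_scale_EFin.
  - by rewrite int_Y EFinM.
  - exact: meas_Yfun.
  - by move=> w; apply: Yfun_ge0 => h s a; exact: Rw0.
  - by rewrite invr_ge0.
apply: ge_ereal_sup => _ [pi [Hpi Hadm] <-].
rewrite value_Ifun // -int_Y.
apply: ge0_le_integral => //.
- by move=> w _; rewrite lee_fin; apply: Ifun_ge0 => // h s a; exact: Rw0.
- by apply/measurable_realfun.measurable_EFinP; exact: meas_Ifun.
- by apply/measurable_realfun.measurable_EFinP; exact: meas_Yfun.
- by move=> w _; rewrite lee_fin; apply: Ifun_le => // h s a; exact: Rw0.
Qed.

Lemma int_Yq (q : nat -> S -> A -> R) : (forall j s a, 0 <= q j s a) ->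
  (\int[Pr]_w (\sum_(sg : {ffun 'I_H -> S}) Mw sg * \sum_(j : 'I_H) \sum_(a : A)
       q j (sg j) a * Rw j (sg j) a w)%:E =
   (\sum_(sg : {ffun 'I_H -> S}) Mw sg * \sum_(j : 'I_H) \sum_(a : A) q j (sg j) a * r j (sg j) a)%:E)%E.
Proof.
move=> q0.
rewrite (@int_sum_EFin _ _ Pr _ (fun sg w => Mw sg * \sum_(j : 'I_H) \sum_(a : A) q j (sg j) a * Rw j (sg j) a w)); last 2 first.
- move=> sg; apply: measurable_realfun.measurable_funM; first exact: measurable_cst.
  apply: measurable_sum => j; apply: measurable_sum => a.
  by apply: measurable_realfun.measurable_funM; [exact: measurable_cst|exact: mRw].
- move=> sg w; apply: mulr_ge0; first exact: Mw_ge0.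
  by apply: sumr_ge0 => j _; apply: sumr_ge0 => a _; apply: mulr_ge0 => //; exact: Rw0.
rewrite -sumEFin; apply: eq_bigr => sg _.
rewrite int_scale_EFin; last 3 first.
- apply: measurable_sum => j; apply: measurable_sum => a.
  by apply: measurable_realfun.measurable_funM; [exact: measurable_cst|exact: mRw].
- by move=> w; apply: sumr_ge0 => j _; apply: sumr_ge0 => a _; apply: mulr_ge0 => //; exact: Rw0.
- exact: Mw_ge0.
rewrite [RHS]EFinM; congr (_ * _)%E.
rewrite (@int_sum_EFin _ _ Pr _ (fun (j : 'I_H) w => \sum_(a : A) q j (sg j) a * Rw j (sg j) a w)); last 2 first.
- move=> j; apply: measurable_sum => a.
  by apply: measurable_realfun.measurable_funM; [exact: measurable_cst|exact: mRw].
- by move=> j w; apply: sumr_ge0 => a _; apply: mulr_ge0 => //; exact: Rw0.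
rewrite -sumEFin; apply: eq_bigr => j _.
rewrite (@int_sum_EFin _ _ Pr _ (fun (a : A) w => q j (sg j) a * Rw j (sg j) a w)); last 2 first.
- by move=> a; apply: measurable_realfun.measurable_funM; [exact: measurable_cst|exact: mRw].
- by move=> a w; apply: mulr_ge0 => //; exact: Rw0.
rewrite -sumEFin; apply: eq_bigr => a _.
rewrite int_scale_EFin //; last 2 first.
- exact: mRw.
- by move=> w; exact: Rw0.
by rewrite Rwm // EFinM.
Qed.

Lemma window0 {T : Type} (Rv : nat -> S -> A -> T -> R) w j :
  window H 0 Rv w j = fun _ _ _ => 0.
Proof.
apply/funext => k; apply/funext => s; apply/funext => a.
by rewrite /window ltn0.
Qed.

Lemma value0 pi : admissible H 0 Rw pi ->
  value H Pr mu P 0 Rw pi =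
  (\sum_(sg : {ffun 'I_H -> S}) Mw sg * \sum_(j : 'I_H) \sum_(a : A)
      pi j (sg j) (fun _ _ _ => 0) a * r j (sg j) a)%:E.
Proof.
case=> Hpi _; rewrite value_Ifun // -(int_Yq (fun j s a => pi j s (fun _ _ _ => 0) a)); last first.
  by move=> j s a; case: (Hpi j s (fun _ _ _ => 0)) => + _; apply.
apply: eq_integral => w _; congr EFin.
Qed.

Lemma ratio_lb L :
  (((#|A|%:R)^-1)%:E <= eratio (opt_value H Pr mu P 0 Rw) (opt_value H Pr mu P L Rw))%E.
Proof.
have [l0 l1] := opt_bounds 0; have [u0 u1] := opt_bounds L.
rewrite /eratio; case: eqP => [_|Hne]; first by rewrite leey.
have c0 : 0 <= (#|A|%:R : R)^-1 by rewrite invr_ge0.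
have y0 := ybar_ge0.
move: u0 u1 Hne; case: (opt_value H Pr mu P L Rw) => [x| |] u0 u1 Hne; last 2 first.
- by move: u1; rewrite leye_eq.
- by move: u0; rewrite leeNy_eq.
have x0 : 0 <= x by rewrite -lee_fin; apply: le_trans u0; rewrite lee_fin mulr_ge0.
have xne : x != 0 by apply/eqP => x0'; apply: Hne; rewrite x0'.
have xgt : 0 < x by rewrite lt_def xne.
rewrite inver (negbTE xne).
apply: (@le_trans _ _ (((#|A|%:R)^-1 * ybar)%:E * (x^-1)%:E)%E); last first.
  by apply: lee_wpmul2r => //; rewrite lee_fin invr_ge0.
rewrite -EFinM lee_fin -mulrA -[X in X <= _]mulr1; apply: ler_wpM2l => //.
by rewrite ler_pdivlMr // mul1r -lee_fin.
Qed.

End Model.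

Lemma pos_of_sum (F : S -> R) : \sum_(s : S) F s = 1 -> exists s, 0 < F s.
Proof.
move=> F1; case: (boolP [exists s, 0 < F s]) => [/existsP//|/existsPn Hn].
have : \sum_(s : S) F s <= 0 by apply: sumr_le0 => s _; rewrite leNgt (negbTE (Hn s)).
by rewrite F1 ler10.
Qed.

Lemma Z_gt0 : (0 < H)%N -> is_distr mu -> is_kernel H P ->
  0 < \sum_(sg : {ffun 'I_H -> S}) Mw sg.
Proof.
move=> H0 [_ mu1] Hk.
have [s0 Hs0] := pos_of_sum _ mu1.
pose nxt (k : nat) (s : S) := odflt s [pick s' | 0 < P k s a0 s'].
have Hnxt k s : (k < H)%N -> 0 < P k s a0 (nxt k s).
  move=> kH; rewrite /nxt; case: pickP => [s' //|Hn] /=.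
  have [s' Hs'] := pos_of_sum _ (proj2 (Hk k kH s a0)).
  by move: (Hn s'); rewrite Hs'.
pose f := fix f k := if k is k'.+1 then nxt k' (f k') else s0.
pose sg := [ffun i : 'I_H => f (val i)].
have Msg : 0 < Mw sg.
  rewrite /Mw; apply: mulr_gt0; apply: prodr_gt0 => i.
  - by move=> /eqP i0; rewrite ffunE i0.
  - move=> _; apply: prodr_gt0 => j /eqP ji; rewrite !ffunE ji /=.
    exact: Hnxt (ltn_ord i).
apply: (lt_le_trans Msg); rewrite (bigD1 sg) //= lerDl.
by apply: sumr_ge0 => ? _; exact: Mw_ge0.
Qed.

Lemma sum_ord_if (N : nat) (i0 : 'I_N) (F : 'I_N -> R) :
  \sum_(k < N) (if (k : nat) == i0 then F k else 0) = F i0.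
Proof.
rewrite (bigD1 i0) //= eqxx big1 ?addr0 // => k kn.
by case: eqP => // /ord_inj ki; rewrite ki eqxx in kn.
Qed.

Lemma sum_fin_if (I : finType) (i0 : I) (F : I -> R) :
  \sum_(k : I) (if k == i0 then F k else 0) = F i0.
Proof.
by rewrite (bigD1 i0) //= eqxx big1 ?addr0 // => k /negbTE ->.
Qed.

Section Example.
Hypothesis Hai : action_independent H P.
Local Notation m := (#|A|.-1).
Let hm : m.+1 = #|A|. Proof. exact: prednK. Qed.

Definition Rex (h : nat) (s : S) (a : A) (w : nat) : R :=
  if h == 0%N then (if w == (enum_rank a : nat) then #|A|%:R else 0) else 0.
Definition rex (h : nat) (s : S) (a : A) : R := if h == 0%N then 1 else 0.

Lemma Rex_ge0 h s a w : 0 <= Rex h s a w.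
Proof. by rewrite /Rex; case: (h == 0%N) => //; case: (_ == _). Qed.

Lemma ex_mean h s a :
  \sum_(k < m.+1) ((m.+1)%:R)^-1 * Rex h s a k = rex h s a.
Proof.
rewrite /Rex /rex; case: (h == 0%N); last by rewrite big1 // => k _; rewrite mulr0.
rewrite -big_distrr /=.
rewrite (eq_bigr (fun k : 'I_m.+1 =>
   if (k : nat) == cast_ord (esym hm) (enum_rank a) then #|A|%:R else 0)) //.
rewrite (sum_ord_if _ (cast_ord (esym hm) (enum_rank a)) (fun _ => #|A|%:R)).
by rewrite hm mulVf // pnatr_eq0 -lt0n.
Qed.

Lemma ex_indep (N : nat) (B : nat -> S -> A -> set R) : (0 < N)%N ->
  uprob R m [set w | forall h, (h < N)%N -> forall s a, B h s a (Rex h s a w)] =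
  (\prod_(h < N) uprob R m [set w | forall s a, B h s a (Rex h s a w)])%E.
Proof.
move=> N0.
have ST h : h != 0%N -> (forall s a, B h s a 0) ->
    ([set w : nat | forall s a, B h s a (Rex h s a w)] = setT)%classic.
  move=> hn Q; apply/seteqP; split => w //= _ s a.
  by rewrite /Rex (negbTE hn); exact: Q.
have S0 h : h != 0%N -> ~ (forall s a, B h s a 0) ->
    ([set w : nat | forall s a, B h s a (Rex h s a w)] = set0)%classic.
  move=> hn Q; apply/seteqP; split => w //= Hw; apply: Q => s a.
  by move: (Hw s a); rewrite /Rex (negbTE hn).
case: (pselect (forall h, (0 < h < N)%N -> forall s a, B h s a 0)) => [Q|nQ].
- rewrite (bigD1 (Ordinal N0)) //= big1 ?mule1; last first.
    move=> i i0; have in0 : (i : nat) != 0%N.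
      by apply: contra i0 => /eqP i0'; apply/eqP/ord_inj.
    rewrite ST ?probability_setT //; apply: Q.
    by rewrite lt0n in0 ltn_ord.
  congr (uprob R m _); apply/seteqP; split => w /= Hw.
    exact: Hw.
  move=> h hN s a; case: (eqVneq h 0%N) => [->|hn]; first exact: Hw.
  rewrite /Rex (negbTE hn); apply: Q; by rewrite lt0n hn.
- have [h hP] : exists h, ~ ((0 < h < N)%N -> forall s a, B h s a 0).
    by apply: contrapT => Hn; apply: nQ => h; apply: contrapT => Hh; apply: Hn; exists h.
  have [/andP [h0 hN] Hb] : (0 < h < N)%N /\ ~ (forall s a, B h s a 0).
    split; first by apply: contrapT => Hh; apply: hP => Hh'; rewrite Hh' in Hh.
    by move=> Hb; apply: hP.
  have hn : h != 0%N by rewrite -lt0n.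
  rewrite (bigD1 (Ordinal hN)) //= S0 // measure0 mul0e.
  rewrite (_ : ([set w | _] = set0)%classic) ?measure0 //.
  apply/seteqP; split => w //= Hw; apply: Hb => s a.
  by move: (Hw h hN s a); rewrite /Rex (negbTE hn).
Qed.

Lemma ex_model : (0 < H)%N -> reward_model H (uprob R m) Rex rex.
Proof.
move=> H0; split.
- by move=> h s a _; exact: meas_nat.
- by move=> h s a w _; exact: Rex_ge0.
- move=> h s a _; rewrite integral_uprob ?ex_mean //.
  by move=> k; exact: Rex_ge0.
- by move=> B mB; exact: ex_indep.
Qed.

Definition gpol : policy R S A := fun h s W a =>
  if a == odflt a0 [pick b | W 0%N s b != 0] then 1 else 0.

Lemma gpol_adm L : admissible H L Rex gpol.
Proof.
split; last by move=> h s a _; exact: meas_nat.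
move=> h s W; split => [a|]; first by rewrite /gpol; case: (_ == _).
exact: (sum_fin_if _ _ (fun _ => 1)).
Qed.

Lemma Ifun_g_ge L k : (0 < L)%N -> (0 < H)%N -> (k < m.+1)%N ->
  (\sum_(sg : {ffun 'I_H -> S}) Mw sg) * #|A|%:R <= Ifun L Rex gpol k.
Proof.
move=> L0 H0 kH; rewrite /Ifun big_distrl /=; apply: ler_sum => sg _.
apply: ler_wpM2l; first exact: Mw_ge0.
rewrite (bigD1 (Ordinal H0)) //= -[X in X <= _]addr0; apply: lerD; last first.
  apply: sumr_ge0 => j _; apply: sumr_ge0 => a _; apply: mulr_ge0; last exact: Rex_ge0.
  by rewrite /gpol; case: (_ == _).
set W := window H L Rex k 0.
rewrite (eq_bigr (fun a => if a == odflt a0 [pick b | W 0%N (sg (Ordinal H0)) b != 0]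
   then Rex 0 (sg (Ordinal H0)) a k else 0)); last first.
  by move=> a _; rewrite /gpol; case: (_ == _); rewrite ?mul1r ?mul0r.
rewrite (sum_fin_if _ _ (fun a => Rex 0 (sg (Ordinal H0)) a k)).
case: pickP => [b Hb | Hn] /=.
  move: Hb; rewrite /W /window L0 add0n H0 /= /Rex /=.
  by case: ifP => _ H1; rewrite ?lexx //; rewrite eqxx in H1.
exfalso; move: (Hn (enum_val (cast_ord hm (Ordinal kH)))).
rewrite /W /window L0 add0n H0 /= /Rex /= enum_valK /=.
by rewrite eqxx pnatr_eq0 -lt0n Apos.
Qed.

Lemma ex_ratio L : (0 < L)%N -> (0 < H)%N -> is_distr mu -> is_kernel H P ->
  (eratio (opt_value H (uprob R m) mu P 0 Rex) (opt_value H (uprob R m) mu P L Rex)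
    <= ((#|A|%:R)^-1)%:E)%E.
Proof.
move=> L0 H0 Hd Hk.
have Hrm := ex_model H0.
set Z := \sum_(sg : {ffun 'I_H -> S}) Mw sg.
have Zgt : 0 < Z by exact: Z_gt0.
have o0 : (opt_value H (uprob R m) mu P 0 Rex <= Z%:E)%E.
  apply: ge_ereal_sup => _ [pi Hadm <-].
  rewrite (value0 _ _ _ _ _ Hrm Hai) // lee_fin.
  apply: ler_sum => sg _; rewrite -[X in _ <= X]mulr1; apply: ler_wpM2l; first exact: Mw_ge0.
  rewrite (eq_bigr (fun j : 'I_H => if (j : nat) == (Ordinal H0 : nat) then 1 else 0)).
    by rewrite (sum_ord_if _ (Ordinal H0) (fun _ => 1)).
  move=> j _; rewrite /rex /=; case: (j == 0%N :> nat).
    under eq_bigr do rewrite mulr1.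
    by case: Hadm => /(_ j (sg j) (fun _ _ _ => 0)) [].
  by rewrite big1 // => a _; rewrite mulr0.
have oL : ((Z * #|A|%:R)%:E <= opt_value H (uprob R m) mu P L Rex)%E.
  have gadm := gpol_adm L.
  have Hv : (value H (uprob R m) mu P L Rex gpol <= opt_value H (uprob R m) mu P L Rex)%E.
    by apply: ereal_sup_ubound; exists gpol.
  apply: le_trans Hv.
  rewrite (value_Ifun _ _ _ _ Hai); last by case: gadm.
  rewrite integral_uprob; last first.
    move=> k; apply: Ifun_ge0; last by case: gadm.
    by move=> h s a _; exact: Rex_ge0.
  rewrite lee_fin.
  apply: (@le_trans _ _ (\sum_(k < m.+1) ((m.+1)%:R)^-1 * (Z * #|A|%:R))).
    rewrite sumr_const card_ord -(mulr_natl (_ * (Z * _)) #|A|.-1.+1) mulrA mulfV ?mul1r //.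
  apply: ler_sum => k _; apply: ler_wpM2l; first by rewrite invr_ge0.
  exact: Ifun_g_ge.
have [_ u1] := opt_bounds _ _ _ _ _ Hrm Hai L.
have o0' : (0 <= opt_value H (uprob R m) mu P 0 Rex)%E.
  have [l0 _] := opt_bounds _ _ _ _ _ Hrm Hai 0.
  apply: le_trans l0; rewrite lee_fin mulr_ge0 ?invr_ge0 //.
  exact: (ybar_ge0 _ _ _ _ _ Hrm).
have Zn : 0 < Z * #|A|%:R by rewrite mulr_gt0 // ltr0n.
rewrite /eratio.
move: oL u1; case: (opt_value H (uprob R m) mu P L Rex) => [x| |] oL u1; last 2 first.
- by move: u1; rewrite leye_eq.
- by move: oL; rewrite leeNy_eq.
have xgt : 0 < x by apply: lt_le_trans Zn _; rewrite -lee_fin.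
rewrite ifF; last by apply/eqP => -[x0]; rewrite x0 ltxx in xgt.
rewrite inver gt_eqF //.
apply: (@le_trans _ _ (Z%:E * (x^-1)%:E)%E).
  by apply: lee_wpmul2r => //; rewrite lee_fin invr_ge0 ltW.
rewrite -EFinM lee_fin ler_pdivrMr // mulrC -ler_pdivrMr ?ltr0n ?invrK //.
by rewrite invr_gt0 ltr0n.
Qed.

End Example.

End Formula.

Theorem mainTheorem7 (R : realType) (S A : finType) (H : nat)
  (mu : S -> R) (P : nat -> S -> A -> S -> R) (L : nat) :
  is_distr mu -> is_kernel H P -> action_independent H P ->
  (0 < #|A|)%N -> (1 <= L <= H)%N ->
  CR H L mu P = ((#|A|%:R : R)^-1)%:E.
Proof.
move=> Hd Hk Hai Apos /andP[L1 LH].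
have /card_gt0P [a0 _] := Apos.
have mu0 : forall s, 0 <= mu s by case: Hd.
have P0 : forall h, (h < H)%N -> forall s a s', 0 <= P h s a s'.
  by move=> h hH s a s'; case: (Hk h hH s a) => + _; apply.
have H0 : (0 < H)%N := leq_trans L1 LH.
apply/eqP; rewrite eq_le; apply/andP; split.
- apply: ge_ereal_inf; exists (CR_r H L mu P (rex R S A)).
    exists (rex R S A); split => // h s a _; rewrite /rex; case: (h == 0%N).
      by rewrite ler01 lexx.
    by rewrite lexx ler01.
  apply: ge_ereal_inf.
  exists (eratio (opt_value H (uprob R #|A|.-1) mu P 0 (Rex R S A))
                 (opt_value H (uprob R #|A|.-1) mu P L (Rex R S A))).
    by exists _, _, (uprob R #|A|.-1), (Rex R S A); split => //; exact: ex_model.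
  exact: (ex_ratio _ _ _ _ _ _ a0 mu0 P0 Apos Hai L L1 H0 Hd Hk).
- apply: le_ereal_inf_tmp => _ [r [rb ->]].
  apply: le_ereal_inf_tmp => _ [d [Om [Pr [Rw [Hrm ->]]]]].
  exact: (ratio_lb _ _ _ _ _ _ a0 mu0 P0 Apos _ _ _ _ _ Hrm Hai L).
Qed.
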